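(* Let $f:\mathbb{R}^d\to\mathbb{R}^m$ be a function such that (1) $f$ is continuous at every point of $\mathbb{R}^d$; (2) $f$ is piecewise Lipschitz with exceptional set $\Theta$; (3) for all $x,y\in\mathbb{R}^d$ and $\eta>0$ there exists a continuous curve $\gamma$ from $x$ to $y$ with $\ell(\gamma)<\|x-y\|+\eta$ that intersects $\Theta$ in only finitely many points. Then $f$ is Lipschitz on $\mathbb{R}^d$ with respect to the Euclidean metric, with the same Lipschitz constant as the intrinsic Lipschitz constant of $f|_{\mathbb{R}^d\setminus\Theta}$.
   Context: Length of a continuous curve $\gamma:[0,1]\to\mathbb{R}^d$: $\ell(\gamma)=\sup\sum_{k=1}^n\|\gamma(t_k)-\gamma(t_{k-1})\|$ over all partitions $0\le t_0<\dots<t_n\le1$. For $A\subseteq\mathbb{R}^d$, the intrinsic metric is $\rho(x,y)=\inf\{\ell(\gamma):\gamma:[0,1]\to A\text{ continuous},\gamma(0)=x,\gamma(1)=y\}$ ($\infty$ if no such curve). $g:A\to\mathbb{R}^m$ is intrinsic Lipschitz with constant $L$ if $\|g(x)-g(y)\|\le L\rho(x,y)$ for all $x,y\in A$. $f:\mathbb{R}^d\to\mathbb{R}^m$ is piecewise Lipschitz with exceptional set $\Theta$ if $\Theta$ is a hypersurface ($(d-1)$-dimensional submanifold of $\mathbb{R}^d$) with finitely many connected components and $f|_{\mathbb{R}^d\setminus\Theta}$ is intrinsic Lipschitz on $\mathbb{R}^d\setminus\Theta$. *)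

(* Defs.v *)
From HB Require Import structures.
From mathcomp Require Import all_boot all_order all_algebra.
From mathcomp Require Import all_classical all_reals all_analysis.
Set Implicit Arguments. Unset Strict Implicit. Unset Printing Implicit Defensive.
Import Order.TTheory GRing.Theory Num.Theory.
Import numFieldNormedType.Exports.
Local Open Scope classical_set_scope.
Local Open Scope ring_scope.

Definition enorm {R : realType} {n : nat} (v : 'rV[R]_n) : R :=
  Num.sqrt (\sum_(i < n) v ord0 i ^+ 2).

(* A continuous curve gamma : [0,1] -> R^d (given as a function on R,
   only its restriction to [0,1] matters). *)
Definition is_curve {R : realType} {d : nat} (g : R -> 'rV[R]_d) : Prop :=
  {within `[0, 1]%classic, continuous g}.

Definition is_partition {R : realType} (n : nat) (t : nat -> R) : Prop :=
  0 <= t 0%N /\ (forall k, (k < n)%N -> t k < t k.+1) /\ t n <= 1.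

Definition curve_length {R : realType} {d : nat} (g : R -> 'rV[R]_d) : \bar R :=
  ereal_sup [set s : \bar R | exists (n : nat) (t : nat -> R),
     is_partition n t /\ s = ((\sum_(k < n) enorm (g (t k.+1) - g (t k)))%:E)%E].

(* Intrinsic metric on A (+oo when no curve in A joins x and y). *)
Definition intrinsic_dist {R : realType} {d : nat} (A : set 'rV[R]_d)
    (x y : 'rV[R]_d) : \bar R :=
  ereal_inf [set s : \bar R | exists g : R -> 'rV[R]_d,
     [/\ is_curve g, g 0 = x, g 1 = y,
         (forall t, 0 <= t <= 1 -> A (g t)) & s = curve_length g]].

(* g : A -> R^m intrinsic Lipschitz with constant L: |g x - g y| <= L rho(x,y)
   for all x, y in A (trivially true when rho(x,y) = +oo). *)
Definition intrinsic_lipschitz {R : realType} {d m : nat} (A : set 'rV[R]_d)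
    (g : 'rV[R]_d -> 'rV[R]_m) (L : R) : Prop :=
  forall x y, A x -> A y -> forall r : R, intrinsic_dist A x y = r%:E ->
    enorm (g x - g y) <= L * r.

(* phi : R^d -> R is C^k on the open set U (iterated directional derivatives
   of all orders up to k exist via Frechet differentiability and are continuous). *)
Fixpoint Ck_on {R : realType} {d : nat} (k : nat) (phi : 'rV[R]_d -> R)
    (U : set 'rV[R]_d) {struct k} : Prop :=
  match k with
  | 0%N => {within U, continuous phi}
  | S k' => [/\ {within U, continuous phi},
               (forall x, U x -> differentiable phi x) &
               (forall v : 'rV[R]_d, Ck_on k' (fun x => 'D_v phi x) U)]
  end.

Definition smooth_on {R : realType} {d : nat} (phi : 'rV[R]_d -> R)
    (U : set 'rV[R]_d) : Prop := forall k, Ck_on k phi U.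

(* Theta is a hypersurface: an embedded (d-1)-dimensional smooth submanifold of
   R^d, i.e. locally the regular zero set of a smooth function. *)
Definition hypersurface {R : realType} {d : nat} (Theta : set 'rV[R]_d) : Prop :=
  forall p, Theta p -> exists (U : set 'rV[R]_d) (phi : 'rV[R]_d -> R),
    [/\ open U, U p, smooth_on phi U,
        (forall q, U q -> exists v : 'rV[R]_d, 'D_v phi q != 0) &
        (forall q, U q -> (Theta q <-> phi q = 0))].

Definition finitely_many_components {R : realType} {d : nat}
    (Theta : set 'rV[R]_d) : Prop :=
  finite_set [set connected_component Theta x | x in Theta].

Definition piecewise_lipschitz {R : realType} {d m : nat}
    (f : 'rV[R]_d -> 'rV[R]_m) (Theta : set 'rV[R]_d) : Prop :=
  [/\ hypersurface Theta, finitely_many_components Theta &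
      exists L : R, intrinsic_lipschitz (~` Theta) f L].

(* Main.v *)
Require Import Defs.
From HB Require Import structures.
From mathcomp Require Import all_boot all_order all_algebra.
From mathcomp Require Import all_classical all_reals all_analysis.
From mathcomp Require Import ring lra.
Import Order.TTheory GRing.Theory Num.Theory.
Import numFieldNormedType.Exports.
Local Open Scope classical_set_scope.
Local Open Scope ring_scope.

Lemma cs_ineq {R : realType} (n : nat) (a b : 'I_n -> R) :
  (\sum_i a i * b i) ^+ 2 <= (\sum_i a i ^+ 2) * (\sum_i b i ^+ 2).
Proof.
set A := \sum_i a i ^+ 2; set B := \sum_i a i * b i; set C := \sum_i b i ^+ 2.
have key : forall t : R, 0 <= A + 2 * t * B + t ^+ 2 * C.
  move=> t.
  have -> : A + 2 * t * B + t ^+ 2 * C = \sum_i (a i + t * b i) ^+ 2.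
    rewrite /A /B /C mulr_sumr [X in _ + X]mulr_sumr -!big_split /=.
    by apply: eq_bigr => i _; rewrite sqrrD exprMn; ring.
  by apply: sumr_ge0 => i _; exact: sqr_ge0.
have C0 : 0 <= C by apply: sumr_ge0 => i _; exact: sqr_ge0.
have [Ceq0|Cgt0] := eqVneq C 0.
  have b0 : forall i, b i = 0.
    move=> i; apply/eqP; rewrite -sqrf_eq0; apply/eqP.
    by apply: (psumr_eq0P (P := predT) _ Ceq0) => // j _; exact: sqr_ge0.
  have -> : B = 0 by rewrite /B big1 // => i _; rewrite b0 mulr0.
  by rewrite Ceq0 expr0n /= mulr0.
have Cp : 0 < C by rewrite lt_neqAle eq_sym Cgt0 C0.
have := key (- B / C).
have -> : A + 2 * (- B / C) * B + (- B / C) ^+ 2 * C = A - B ^+ 2 / C.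
  by field; rewrite Cgt0.
rewrite subr_ge0 ler_pdivrMr //; by rewrite mulrC.
Qed.

Lemma enorm_ge0 {R : realType} {n} (v : 'rV[R]_n) : 0 <= enorm v.
Proof. exact: sqrtr_ge0. Qed.

Lemma enorm_sq {R : realType} {n} (v : 'rV[R]_n) :
  enorm v ^+ 2 = \sum_i v ord0 i ^+ 2.
Proof. by rewrite /enorm sqr_sqrtr // sumr_ge0 // => i _; exact: sqr_ge0. Qed.

Lemma enorm0 {R : realType} n : enorm (0 : 'rV[R]_n) = 0.
Proof. by rewrite /enorm big1 ?sqrtr0 // => i _; rewrite mxE expr0n. Qed.

Lemma enormN {R : realType} {n} (v : 'rV[R]_n) : enorm (- v) = enorm v.
Proof. by rewrite /enorm; congr Num.sqrt; apply: eq_bigr => i _; rewrite mxE sqrrN. Qed.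

Lemma enormB {R : realType} {n} (u v : 'rV[R]_n) : enorm (u - v) = enorm (v - u).
Proof. by rewrite -enormN opprB. Qed.

Lemma enorm_le0 {R : realType} {n} (v : 'rV[R]_n) : enorm v <= 0 -> v = 0.
Proof.
move=> h; have e0 : enorm v = 0 by apply/eqP; rewrite eq_le h enorm_ge0.
have s0 : \sum_i v ord0 i ^+ 2 = 0 by rewrite -enorm_sq e0 expr0n.
apply/rowP => i; rewrite mxE; apply/eqP; rewrite -sqrf_eq0; apply/eqP.
by apply: (psumr_eq0P (P := predT) _ s0) => // j _; exact: sqr_ge0.
Qed.

Lemma enormD {R : realType} {n} (u v : 'rV[R]_n) : enorm (u + v) <= enorm u + enorm v.
Proof.
rewrite -(@ler_pXn2r _ 2) ?nnegrE ?addr_ge0 ?enorm_ge0 //.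
rewrite sqrrD !enorm_sq.
have -> : \sum_i (u + v) ord0 i ^+ 2 =
   \sum_i u ord0 i ^+ 2 + 2 * (\sum_i u ord0 i * v ord0 i) + \sum_i v ord0 i ^+ 2.
  rewrite mulr_sumr -!big_split /=; apply: eq_bigr => i _; rewrite mxE; ring.
rewrite lerD2r lerD2l -[X in _ <= X]mulr_natl ler_pM2l //.
apply: le_trans (ler_norm _) _.
rewrite /enorm -sqrtrM ?sumr_ge0 // => [|i _]; last exact: sqr_ge0.
rewrite -sqrtr_sqr ler_sqrt; first exact: cs_ineq.
by apply: mulr_ge0; apply: sumr_ge0 => i _; exact: sqr_ge0.
Qed.

Lemma enorm_le_mx {R : realType} {n} (v : 'rV[R]_n) : enorm v <= n%:R * `|v|.
Proof.
have nv : 0 <= `|v| by [].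
rewrite /enorm -(@ler_pXn2r _ 2) ?nnegrE ?mulr_ge0 ?sqrtr_ge0 //.
rewrite sqr_sqrtr ?sumr_ge0 // => [|i _]; last exact: sqr_ge0.
apply: (@le_trans _ _ (\sum_(i < n) `|v| ^+ 2)).
  apply: ler_sum => i _; rewrite -real_normK ?num_real //.
  rewrite lerXn2r ?nnegrE //.
  have -> : `|v| = mx_norm v by [].
  rewrite mx_normrE.
  by apply: (le_bigmax _ (fun ij => `|v ij.1 ij.2|) (ord0, i)).
rewrite sumr_const card_ord exprMn -[X in X <= _]mulr_natl ler_wpM2r ?sqr_ge0 //.
rewrite -natrX ler_nat; case: n {v nv} => // n; by rewrite expnS leq_pmulr ?expn_gt0.
Qed.
Lemma in01 {R : realType} (x : R) : (`[0, 1]%classic : set R) x <-> (0 <= x <= 1).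
Proof. by rewrite /= in_itv. Qed.


Lemma within01_eps {R : realType} {V : normedModType R} {h : R -> V} :
  {within `[0,1]%classic, continuous h} -> forall a, 0 <= a <= 1 ->
  forall e, 0 < e -> exists2 del, 0 < del &
    forall s, 0 <= s <= 1 -> `|s - a| < del -> `|h s - h a| < e.
Proof.
move=> /subspace_continuousP hc a a01 e e0.
have := hc a (proj2 (in01 a) a01) => /cvgrPdist_lt /(_ e e0).
rewrite /within /= => /nbhs_ballP [del del0 H].
exists del => // s s01 sa.
rewrite distrC; apply: (H s); last exact/in01.
by rewrite -ball_normE /= distrC.
Qed.

Lemma eps_within01 {R : realType} {V : normedModType R} {h : R -> V} :
  (forall a, 0 <= a <= 1 -> forall e, 0 < e -> exists2 del, 0 < del &
    forall s, 0 <= s <= 1 -> `|s - a| < del -> `|h s - h a| < e) ->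
  {within `[0,1]%classic, continuous h}.
Proof.
move=> H; apply/subspace_continuousP => a /in01 a01.
apply/cvgrPdist_lt => e e0.
have [del del0 Hd] := H a a01 e e0.
rewrite /within /=; apply/nbhs_ballP; exists del => // s /= sa /in01 s01.
rewrite distrC; apply: Hd => //.
by move: sa; rewrite -ball_normE /= distrC.
Qed.

Lemma comp_within01 {R : realType} {U V : normedModType R} (g : R -> U) (f : U -> V) :
  {within `[0,1]%classic, continuous g} -> continuous f ->
  {within `[0,1]%classic, continuous (f \o g)}.
Proof.
move=> /subspace_continuousP gc fc; apply/subspace_continuousP => a Aa.
apply: cvg_comp; [exact: gc | exact: fc].
Qed.

Lemma within01_enorm {R : realType} {k} {h : R -> 'rV[R]_k} :
  {within `[0,1]%classic, continuous h} -> forall a, 0 <= a <= 1 ->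
  forall e, 0 < e -> exists2 del, 0 < del &
    forall s, 0 <= s <= 1 -> `|s - a| < del -> enorm (h s - h a) < e.
Proof.
move=> hc a a01 e e0.
have kp : 0 < k.+1%:R :> R by rewrite ltr0n.
have [del del0 H] := @within01_eps _ _ h hc a a01 _ (divr_gt0 e0 kp).
exists del => // s s01 sa.
have H1 := enorm_le_mx (h s - h a).
apply: (le_lt_trans H1).
apply: (@le_lt_trans _ _ (k.+1%:R * `|h s - h a|)).
  by rewrite ler_wpM2r // ler_nat.
by rewrite -ltr_pdivlMl // mulrC H.
Qed.

Definition psum {R : realType} {d} (g : R -> 'rV[R]_d) (n : nat) (t : nat -> R) : R :=
  \sum_(k < n) enorm (g (t k.+1) - g (t k)).

Definition xpart {R : realType} (a b : R) (n : nat) (t : nat -> R) :=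
  [/\ t 0%N = a, t n = b & forall k, (k < n)%N -> t k < t k.+1].

Lemma glue {R : realType} {d} (g : R -> 'rV[R]_d) {a c b n1 t1 n2 t2} :
  xpart a c n1 t1 -> xpart c b n2 t2 -> exists t, xpart a b (n1 + n2) t /\
  psum g (n1 + n2) t = psum g n1 t1 + psum g n2 t2.
Proof.
move=> [a1 c1 s1] [c2 b2 s2].
pose t k := if (k <= n1)%N then t1 k else t2 (k - n1)%N.
have tL k : (k <= n1)%N -> t k = t1 k by rewrite /t => ->.
have tR k : (n1 <= k)%N -> t k = t2 (k - n1)%N.
  rewrite /t => h; case: ifP => // h2.
  have -> : k = n1 by apply/eqP; rewrite eqn_leq h h2.
  by rewrite c1 subnn c2.
exists t; split; first split.
- by rewrite tL.
- by rewrite tR ?leq_addr // addKn.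
- move=> k kn; case: (ltnP k n1) => h.
    by rewrite (tL k) ?(ltnW h) // (tL k.+1) //; exact: s1.
  rewrite (tR k) // (tR k.+1) ?(leq_trans h) // subSn //; apply: s2.
  by rewrite ltn_subLR.
rewrite /psum big_split_ord /=; congr (_ + _); apply: eq_bigr => i _ /=.
  by rewrite !tL // ltnW.
rewrite (tR (n1 + i)%N) ?leq_addr // (tR (n1 + i).+1)%N; last by rewrite ltnW // ltnS leq_addr.
by rewrite -addnS !addKn.
Qed.

Lemma xpart1 {R : realType} {d} (g : R -> 'rV[R]_d) a b : a < b ->
  xpart a b 1 (fun k => if k is 0%N then a else b) /\
  psum g 1 (fun k => if k is 0%N then a else b) = enorm (g b - g a).
Proof.
move=> ab; split; first by split => // -[|k].
by rewrite /psum big_ord1.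
Qed.

Lemma xpart0 {R : realType} {d} (g : R -> 'rV[R]_d) a :
  xpart a a 0 (fun _ => a) /\ psum g 0 (fun _ => a) = 0.
Proof. by split; [split | rewrite /psum big_ord0]. Qed.

Lemma psum_ge0 {R : realType} {d} (g : R -> 'rV[R]_d) n t : 0 <= psum g n t.
Proof. by apply: sumr_ge0 => i _; exact: enorm_ge0. Qed.

Lemma extend {R : realType} {d} (g : R -> 'rV[R]_d) a b n (q : nat -> R) :
  a < q 0%N -> q n < b -> (forall k, (k < n)%N -> q k < q k.+1) ->
  exists u, xpart a b n.+2 u /\ psum g n q <= psum g n.+2 u.
Proof.
move=> aq qb qs.
pose u k := if k is k'.+1 then (if (k' <= n)%N then q k' else b) else a.
exists u; split; first split => //.
- by rewrite /u ltnn.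
- case=> [|k] kn; first by rewrite /u leq0n.
  rewrite /u; case: (ltnP k n) => h.
    by rewrite (ltnW h); exact: qs.
  have -> : k = n by apply/eqP; rewrite eqn_leq h andbT; move: kn; rewrite !ltnS.
  by rewrite leqnn.
rewrite /psum big_ord_recl big_ord_recr /=.
have -> : \sum_(i < n) enorm (g (u (bump 0 i).+1) - g (u (bump 0 i))) =
          \sum_(k < n) enorm (g (q k.+1) - g (q k)).
  apply: eq_bigr => i _; rewrite /u /bump /= add1n ltn_ord (ltnW (ltn_ord i)) //.
by rewrite addrCA lerDl addr_ge0 // enorm_ge0.
Qed.

Lemma cl_part {R : realType} {d} (g : R -> 'rV[R]_d) n t :
  is_partition n t -> ((psum g n t)%:E <= curve_length g)%E.
Proof. by move=> pt; apply: ereal_sup_ubound; exists n, t. Qed.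

Lemma cl_ge0 {R : realType} {d} (g : R -> 'rV[R]_d) : (0 <= curve_length g)%E.
Proof.
have -> : (0 = (psum g 0 (fun _ => 0))%:E)%E by rewrite /psum big_ord0.
by apply: cl_part; split => //; split.
Qed.

Lemma cl_ends {R : realType} {d} (g : R -> 'rV[R]_d) :
  ((enorm (g 1 - g 0))%:E <= curve_length g)%E.
Proof.
have -> : enorm (g 1 - g 0) = psum g 1 (fun k => if k is 0%N then 0 else 1).
  by rewrite /psum big_ord1.
by apply: cl_part; split => //; split => // -[|k].
Qed.

Lemma xpart_part {R : realType} n (t : nat -> R) : xpart 0 1 n t -> is_partition n t.
Proof. by move=> [t0 t1 ts]; split; [rewrite t0|split => //; rewrite t1]. Qed.

Definition reparam {R : realType} {d} (g : R -> 'rV[R]_d) (s s' : R) :=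
  fun t : R => g (s + (s' - s) * t).

Lemma reparam_curve {R : realType} {d} (g : R -> 'rV[R]_d) (s s' : R) :
  0 <= s -> s < s' -> s' <= 1 -> is_curve g -> is_curve (reparam g s s').
Proof.
move=> s0 ss' s'1 gc; apply: eps_within01 => a a01 e e0.
have sp : 0 < s' - s by rewrite subr_gt0.
have hin : forall t : R, 0 <= t <= 1 -> 0 <= s + (s' - s) * t <= 1.
  move=> t /andP[t0 t1]; apply/andP; split.
    by rewrite addr_ge0 // mulr_ge0 // ltW.
  apply: (@le_trans _ _ (s + (s' - s) * 1)); last by rewrite mulr1 addrC subrK.
  by rewrite lerD2l ler_wpM2l // ltW.
have [del del0 H] := within01_eps gc _ (hin a a01) _ e0.
exists (del / (s' - s)); first by rewrite divr_gt0.
move=> t t01 ta; rewrite /reparam; apply: H; first exact: hin.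
have -> : s + (s' - s) * t - (s + (s' - s) * a) = (s' - s) * (t - a) by ring.
by rewrite normrM gtr0_norm // mulrC -ltr_pdivlMr.
Qed.

Lemma reparam_part {R : realType} {n} {t : nat -> R} {s s' : R} :
  s < s' -> is_partition n t ->
  [/\ s <= s + (s' - s) * t 0%N, s + (s' - s) * t n <= s' &
      forall k, (k < n)%N -> s + (s' - s) * t k < s + (s' - s) * t k.+1].
Proof.
move=> ss' [t0 [ts tn]]; have sp : 0 < s' - s by rewrite subr_gt0.
split.
- by rewrite lerDl mulr_ge0 // ltW.
- apply: (@le_trans _ _ (s + (s' - s) * 1)); last by rewrite mulr1 addrC subrK.
  by rewrite lerD2l ler_wpM2l // ltW.
- by move=> k kn; rewrite ltrD2l ltr_pM2l // ts.
Qed.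

Lemma reparam_len {R : realType} {d} (g : R -> 'rV[R]_d) (s s' : R) :
  0 <= s -> s < s' -> s' <= 1 ->
  (curve_length (reparam g s s') <= curve_length g)%E.
Proof.
move=> s0 ss' s'1; apply: ge_ereal_sup => y [n [t [pt ->]]].
have [q0 qn qs] := reparam_part ss' pt.
have -> : \sum_(k < n) enorm (reparam g s s' (t k.+1) - reparam g s s' (t k)) =
          psum g n (fun k => s + (s' - s) * t k) by [].
apply: cl_part; split; first exact: le_trans q0.
by split => //; exact: le_trans s'1.
Qed.

Lemma middle {R : realType} {d m} (f : 'rV[R]_d -> 'rV[R]_m) (Theta : set 'rV[R]_d)
    (g : R -> 'rV[R]_d) (L c s s' : R) :
  is_curve g -> (curve_length g < c%:E)%E ->
  intrinsic_lipschitz (~` Theta) f L ->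
  0 <= s -> s < s' -> s' <= 1 -> (forall t, s <= t <= s' -> ~ Theta (g t)) ->
  (0 <= L -> forall e, 0 < e -> exists n q,
     [/\ s <= q 0%N, q n <= s', (forall k, (k < n)%N -> q k < q k.+1) &
         enorm (f (g s) - f (g s')) <= L * psum g n q + e])
  /\ (L < 0 -> g s = g s').
Proof.
move=> gc gfin Lip s0 ss' s'1 nT.
set h := reparam g s s'.
have sp : 0 < s' - s by rewrite subr_gt0.
have hc : is_curve h by exact: reparam_curve.
have h0 : h 0 = g s by rewrite /h /reparam mulr0 addr0.
have h1 : h 1 = g s' by rewrite /h /reparam mulr1 addrC subrK.
have hin : forall t, 0 <= t <= 1 -> (~` Theta) (h t).
  move=> t /andP[t0 t1]; apply: nT; apply/andP; split.
    by rewrite lerDl mulr_ge0 // ltW.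
  apply: (@le_trans _ _ (s + (s' - s) * 1)); last by rewrite mulr1 addrC subrK.
  by rewrite lerD2l ler_wpM2l // ltW.
set D := intrinsic_dist (~` Theta) (g s) (g s').
have Dle : (D <= curve_length h)%E.
  by apply: ereal_inf_lbound; exists h; split.
have hle := reparam_len g s s' s0 ss' s'1.
have D0 : (0 <= D)%E.
  by apply: le_ereal_inf_tmp => y [g' [_ _ _ _ ->]]; exact: cl_ge0.
have Dfin : D \is a fin_num.
  rewrite ge0_fin_numE //; apply: (le_lt_trans Dle); apply: (le_lt_trans hle).
  exact: (lt_le_trans gfin (leey _)).
set r := fine D.
have Dr : D = r%:E by rewrite /r fineK.
have r0 : 0 <= r by rewrite -lee_fin -Dr.
have Lr : enorm (f (g s) - f (g s')) <= L * r.
  apply: Lip => //; apply: nT; apply/andP; split => //; exact: ltW.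
have rle : (r%:E <= curve_length h)%E by rewrite -Dr.
split.
  move=> L0 e e0.
  have [L0'|Lp] := eqVneq L 0.
    exists 0%N, (fun _ => s); split => //; first exact: ltW.
    by move: Lr; rewrite L0' !mul0r add0r => /le_trans; apply; exact: ltW.
  have Lpos : 0 < L by rewrite lt_neqAle eq_sym Lp L0.
  have : ((r - e / L)%:E < curve_length h)%E.
    apply: (lt_le_trans _ rle); rewrite lte_fin ltrBlDr ltrDl divr_gt0 //.
  move=> /ereal_sup_gt [y [n [t [pt ->]]]]; rewrite lte_fin => lt.
  have [q0 qn qs] := reparam_part ss' pt.
  exists n, (fun k => s + (s' - s) * t k); split => //.
  apply: (le_trans Lr).
  have -> : psum g n (fun k => s + (s' - s) * t k) =
            \sum_(k < n) enorm (h (t k.+1) - h (t k)) by [].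
  rewrite -(ltr_pM2l Lpos) in lt.
  have E : L * (r - e / L) = L * r - e by field; exact: Lp.
  by rewrite E ltrBlDr in lt; exact: ltW.
move=> Lneg.
have gr : enorm (g s' - g s) <= r.
  rewrite -lee_fin -Dr; apply: le_ereal_inf_tmp => y [g' [_ g0 g1 _ ->]].
  by rewrite -g0 -g1; exact: cl_ends.
have : L * r >= 0 by apply: le_trans Lr; exact: enorm_ge0.
move=> Lr0.
have r0' : r <= 0.
  rewrite leNgt; apply/negP => rp.
  by move: Lr0; rewrite leNgt (pmulr_llt0 _ rp) Lneg.
have : enorm (g s' - g s) <= 0 by exact: le_trans gr r0'.
by move/enorm_le0/eqP; rewrite subr_eq0 => /eqP.
Qed.

Lemma tri3 {R : realType} {n} (u v w : 'rV[R]_n) : enorm (u - w) <= enorm (u - v) + enorm (v - w).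
Proof. by have := enormD (u - v) (v - w); rewrite addrA subrK. Qed.

Lemma small0 {R : realType} {n} (v : 'rV[R]_n) : (forall e, 0 < e -> enorm v < e) -> v = 0.
Proof.
move=> H; apply: enorm_le0; rewrite leNgt; apply/negP => vp.
by have := H _ vp; rewrite ltxx.
Qed.

Lemma near_right {R : realType} {k} (F : R -> 'rV[R]_k) (a ub e : R) :
  {within `[0,1]%classic, continuous F} -> 0 <= a -> a < ub -> ub <= 1 -> 0 < e ->
  exists s, [/\ a < s, s < ub & enorm (F s - F a) < e].
Proof.
move=> Fc a0 aub ub1 e0.
have a01 : 0 <= a <= 1 by rewrite a0 /= ltW // (lt_le_trans aub ub1).
have [del del0 H] := within01_enorm Fc _ a01 _ e0.
set mu := Num.min del (ub - a).
have mu0 : 0 < mu by rewrite lt_min del0 subr_gt0.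
have mud : mu <= del by rewrite ge_min lexx.
have muu : mu <= ub - a by rewrite ge_min lexx orbT.
exists (a + mu / 2); split.
- by rewrite ltrDl divr_gt0.
- lra.
- apply: H; first (apply/andP; split; lra).
  rewrite addrC addKr ger0_norm; lra.
Qed.

Lemma near_left {R : realType} {k} (F : R -> 'rV[R]_k) (b lb e : R) :
  {within `[0,1]%classic, continuous F} -> 0 <= lb -> lb < b -> b <= 1 -> 0 < e ->
  exists s, [/\ lb < s, s < b & enorm (F s - F b) < e].
Proof.
move=> Fc lb0 lbb b1 e0.
have b01 : 0 <= b <= 1 by rewrite b1 andbT (le_trans lb0) // ltW.
have [del del0 H] := within01_enorm Fc _ b01 _ e0.
set mu := Num.min del (b - lb).
have mu0 : 0 < mu by rewrite lt_min del0 subr_gt0.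
have mud : mu <= del by rewrite ge_min lexx.
have muu : mu <= b - lb by rewrite ge_min lexx orbT.
exists (b - mu / 2); split.
- lra.
- by rewrite ltrBlDr ltrDl divr_gt0.
- apply: H; first (apply/andP; split; lra).
  rewrite addrC addKr normrN ger0_norm; lra.
Qed.

Definition Pab {R : realType} {d m} (f : 'rV[R]_d -> 'rV[R]_m) (g : R -> 'rV[R]_d)
    (L a b : R) : Prop :=
  (0 <= L -> forall e, 0 < e -> exists n u,
      xpart a b n u /\ enorm (f (g a) - f (g b)) <= L * psum g n u + e)
  /\ (L < 0 -> g a = g b).

Lemma base {R : realType} {d m} (f : 'rV[R]_d -> 'rV[R]_m) (Theta : set 'rV[R]_d)
    (g : R -> 'rV[R]_d) (L c a b : R) :
  continuous f -> is_curve g -> (curve_length g < c%:E)%E ->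
  intrinsic_lipschitz (~` Theta) f L ->
  0 <= a -> a <= b -> b <= 1 -> (forall t, a < t < b -> ~ Theta (g t)) ->
  Pab f g L a b.
Proof.
move=> fc gc gfin Lip a0 ab b1 nT.
have [eab|ltab] := eqVneq a b.
  rewrite -eab; split => // L0 e e0.
  have [x0 p0] := xpart0 g a.
  exists 0%N, (fun _ => a); split => //.
  by rewrite p0 mulr0 add0r subrr enorm0 ltW.
have lab : a < b by rewrite lt_neqAle ltab ab.
have fgc : {within `[0,1]%classic, continuous (f \o g)} by exact: comp_within01.
set mid := (a + b) / 2.
have amid : a < mid by rewrite /mid; lra.
have midb : mid < b by rewrite /mid; lra.
have mid0 : 0 <= mid by lra.
have mid1 : mid <= 1 by lra.
have inner : forall s s', a < s -> s < s' -> s' < b ->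
    forall t, s <= t <= s' -> ~ Theta (g t).
  move=> s s' aS ss' s'b t /andP[st ts']; apply: nT; apply/andP; split.
    exact: lt_le_trans st.
  exact: le_lt_trans s'b.
split.
  move=> L0 e e0.
  have e3 : 0 < e / 3 by rewrite divr_gt0.
  have [s [aS smid Hs]] := near_right (f \o g) a mid (e / 3) fgc a0 amid mid1 e3.
  have [s' [mids' s'b Hs']] := near_left (f \o g) b mid (e / 3) fgc mid0 midb b1 e3.
  have ss' : s < s' by exact: lt_trans mids'.
  have [Hm _] := middle f Theta g L c s s' gc gfin Lip (le_trans a0 (ltW aS)) ss'
     (le_trans (ltW s'b) b1) (inner s s' aS ss' s'b).
  have [n [q [q0 qn qs Hq]]] := Hm L0 _ e3.
  have [u [xu pu]] := extend g a b n q (lt_le_trans aS q0) (le_lt_trans qn s'b) qs.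
  exists n.+2, u; split => //.
  apply: (le_trans (tri3 _ (f (g s)) _)).
  apply: (le_trans (lerD (lexx _) (tri3 _ (f (g s')) _))).
  rewrite enormB in Hs.
  move: Hs Hs' => /= Hs Hs'.
  have : L * psum g n q <= L * psum g n.+2 u by rewrite ler_wpM2l.
  lra.
move=> Lneg.
apply/eqP; rewrite -subr_eq0; apply/eqP; apply: small0 => e e0.
have e2 : 0 < e / 2 by rewrite divr_gt0.
have [s [aS smid Hs]] := near_right g a mid (e / 2) gc a0 amid mid1 e2.
have [s' [mids' s'b Hs']] := near_left g b mid (e / 2) gc mid0 midb b1 e2.
have ss' : s < s' by exact: lt_trans mids'.
have [_ Hm] := middle f Theta g L c s s' gc gfin Lip (le_trans a0 (ltW aS)) ss'
     (le_trans (ltW s'b) b1) (inner s s' aS ss' s'b).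
have gss := Hm Lneg.
apply: (le_lt_trans (tri3 _ (g s) _)).
rewrite enormB gss in Hs; rewrite gss; lra.
Qed.

Lemma first_visit {R : realType} {d} (g : R -> 'rV[R]_d) (a b t0 : R) :
  is_curve g -> 0 <= a -> a <= t0 -> t0 <= b -> b <= 1 ->
  exists c1, [/\ a <= c1, c1 <= t0, g c1 = g t0 &
                 forall t, a < t < c1 -> g t <> g t0].
Proof.
move=> gc a0 at0 t0b b1.
set E := [set t | a <= t <= b /\ g t = g t0].
have Et0 : E t0 by split => //; rewrite at0 t0b.
have lbE : lbound E a by move=> t [/andP[]].
have hiE : has_inf E by split; [exists t0 | exists a].
set c1 := inf E.
have c1t0 : c1 <= t0 by apply: ge_inf => //; exists a.
have ac1 : a <= c1 by apply: lb_le_inf => //; exists t0.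
exists c1; split => //.
- apply/eqP; rewrite eq_sym -subr_eq0; apply/eqP; apply: small0 => e e0.
  have c01 : 0 <= c1 <= 1.
    by rewrite (le_trans a0 ac1) /= (le_trans c1t0 (le_trans t0b b1)).
  have [del del0 H] := within01_enorm gc _ c01 _ e0.
  have [t [/andP[aT tb] gt] tlt] := inf_adherent del0 hiE.
  have c1t : c1 <= t by apply: ge_inf; [exists a | split => //; rewrite aT tb].
  rewrite -gt; apply: H.
    by rewrite (le_trans a0 aT) (le_trans tb b1).
  by rewrite ger0_norm ?subr_ge0 // ltrBlDl.
- move=> t /andP[aT tc1] gt.
  have : c1 <= t.
    apply: ge_inf; first by exists a.
    split => //; rewrite (ltW aT) /= (le_trans (ltW tc1) (le_trans c1t0 t0b)) //.
  by rewrite leNgt tc1.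
Qed.

Lemma last_visit {R : realType} {d} (g : R -> 'rV[R]_d) (a b t0 : R) :
  is_curve g -> 0 <= a -> a <= t0 -> t0 <= b -> b <= 1 ->
  exists c2, [/\ t0 <= c2, c2 <= b, g c2 = g t0 &
                 forall t, c2 < t < b -> g t <> g t0].
Proof.
move=> gc a0 at0 t0b b1.
set E := [set t | a <= t <= b /\ g t = g t0].
have Et0 : E t0 by split => //; rewrite at0 t0b.
have ubE : ubound E b by move=> t [/andP[]].
have hsE : has_sup E by split; [exists t0 | exists b].
set c2 := sup E.
have t0c2 : t0 <= c2 by exact: sup_upper_bound Et0.
have c2b : c2 <= b by apply: ge_sup => //; exists t0.
exists c2; split => //.
- apply/eqP; rewrite eq_sym -subr_eq0; apply/eqP; apply: small0 => e e0.
  have c01 : 0 <= c2 <= 1.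
    by rewrite (le_trans a0 (le_trans at0 t0c2)) /= (le_trans c2b b1).
  have [del del0 H] := within01_enorm gc _ c01 _ e0.
  have [t [/andP[aT tb] gt] tlt] := sup_adherent del0 hsE.
  have tc2 : t <= c2 by apply: sup_upper_bound => //; split => //; rewrite aT tb.
  rewrite -gt; apply: H.
    by rewrite (le_trans a0 aT) (le_trans tb b1).
  by rewrite distrC ger0_norm ?subr_ge0 // ltrBlDr addrC -ltrBlDr.
- move=> t /andP[c2t tb] gt.
  have : t <= c2.
    apply: sup_upper_bound => //.
    split => //; rewrite (ltW tb) andbT (le_trans at0 (le_trans t0c2 (ltW c2t))) //.
  by rewrite leNgt c2t.
Qed.

Lemma gap_part {R : realType} {d} (g : R -> 'rV[R]_d) (c1 c2 : R) :
  c1 <= c2 -> g c1 = g c2 -> exists n u, xpart c1 c2 n u /\ psum g n u = 0.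
Proof.
move=> c12 gc; have [e|lt] := eqVneq c1 c2.
  by rewrite -e; have [x p] := xpart0 g c1; exists 0%N, (fun _ => c1).
have lt' : c1 < c2 by rewrite lt_neqAle lt c12.
have [x p] := xpart1 g c1 c2 lt'.
by exists 1%N, (fun k => if k is 0%N then c1 else c2); rewrite p gc subrr enorm0.
Qed.

Lemma combine {R : realType} {d m} (f : 'rV[R]_d -> 'rV[R]_m) (g : R -> 'rV[R]_d)
    (L a c1 c2 b : R) :
  c1 <= c2 -> g c1 = g c2 -> Pab f g L a c1 -> Pab f g L c2 b -> Pab f g L a b.
Proof.
move=> c12 gc [P1 Q1] [P2 Q2]; split; last first.
  by move=> Ln; rewrite (Q1 Ln) gc (Q2 Ln).
move=> L0 e e0.
have e2 : 0 < e / 2 by rewrite divr_gt0.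
have [n1 [u1 [x1 H1]]] := P1 L0 _ e2.
have [n2 [u2 [x2 H2]]] := P2 L0 _ e2.
have [n3 [u3 [x3 p3]]] := gap_part g c1 c2 c12 gc.
have [v [xv pv]] := glue g x1 x3.
have [w [xw pw]] := glue g xv x2.
exists ((n1 + n3) + n2)%N, w; split => //.
rewrite pw pv p3 addr0.
apply: (le_trans (tri3 _ (f (g c1)) _)).
rewrite gc in H1 *.
rewrite mulrDr; lra.
Qed.

Lemma ind_main {R : realType} {d m} (f : 'rV[R]_d -> 'rV[R]_m) (Theta : set 'rV[R]_d)
    (g : R -> 'rV[R]_d) (L c : R) :
  continuous f -> is_curve g -> (curve_length g < c%:E)%E ->
  intrinsic_lipschitz (~` Theta) f L ->
  forall n (l : seq 'rV[R]_d) a b, (size l <= n)%N -> 0 <= a -> a <= b -> b <= 1 ->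
  (forall t, a < t < b -> Theta (g t) -> g t \in l) -> Pab f g L a b.
Proof.
move=> fc gc gfin Lip n; elim: n => [|n IH] l a b sz a0 ab b1 Hl.
  have [[t0 [t0ab Th]]|nE] := pselect (exists t0, a < t0 < b /\ Theta (g t0)).
    by move: (Hl t0 t0ab Th); move: sz; rewrite leqn0 => /nilP ->.
  apply: (base f Theta g L c a b fc gc gfin Lip a0 ab b1) => t tab Th.
  by apply: nE; exists t.
have [[t0 [t0ab Th]]|nE] := pselect (exists t0, a < t0 < b /\ Theta (g t0)); last first.
  apply: (base f Theta g L c a b fc gc gfin Lip a0 ab b1) => t tab Th.
  by apply: nE; exists t.
move: t0ab => /andP[at0 t0b].
have [c1 [ac1 c1t0 gc1 H1]] := first_visit g a b t0 gc a0 (ltW at0) (ltW t0b) b1.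
have [c2 [t0c2 c2b gc2 H2]] := last_visit g a b t0 gc a0 (ltW at0) (ltW t0b) b1.
set p := g t0.
set l' := seq.filter (predC1 p) l.
have pl : p \in l by apply: Hl => //; rewrite at0 t0b.
have sz' : (size l' <= n)%N.
  rewrite -ltnS; apply: (leq_trans _ sz).
  rewrite /l' size_filter -(count_predC (predC1 p) l) -addn1 leq_add2l.
  rewrite lt0n -lt0n -has_count; apply/hasP; exists p => //=.
  by rewrite negbK.
apply: (combine f g L a c1 c2 b).
- exact: le_trans c1t0 t0c2.
- by rewrite gc1 gc2.
- apply: (IH l') => //.
  + by apply: le_trans c1t0 (le_trans (ltW t0b) b1).
  + move=> t /andP[aT tc1] Tht.
    rewrite /l' mem_filter /= Hl ?andbT; last by [].
      by apply/eqP; apply: H1; rewrite aT tc1.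
    by rewrite aT /= (lt_le_trans tc1 (le_trans c1t0 (ltW t0b))).
- apply: (IH l') => //.
  + exact: le_trans a0 (le_trans (ltW at0) t0c2).
  + move=> t /andP[c2t tb] Tht.
    rewrite /l' mem_filter /= Hl ?andbT; last by [].
      by apply/eqP; apply: H2; rewrite c2t tb.
    by rewrite tb andbT (le_lt_trans (le_trans (ltW at0) t0c2) c2t).
Qed.

Theorem lemma3p6 (R : realType) (d m : nat) (f : 'rV[R]_d -> 'rV[R]_m)
    (Theta : set 'rV[R]_d) :
  continuous f ->
  piecewise_lipschitz f Theta ->
  (forall (x y : 'rV[R]_d) (eta : R), 0 < eta ->
     exists g : R -> 'rV[R]_d,
       [/\ is_curve g, g 0 = x, g 1 = y,
           (curve_length g < (enorm (x - y) + eta)%:E)%E &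
           finite_set ((g @` `[0, 1]) `&` Theta)]) ->
  forall L : R, intrinsic_lipschitz (~` Theta) f L ->
    forall x y : 'rV[R]_d, enorm (f x - f y) <= L * enorm (x - y).
Proof.
move=> fc _ Hcurve L Lip x y.
have getP : forall eta, 0 < eta -> exists g, [/\ is_curve g, g 0 = x, g 1 = y,
    (curve_length g < (enorm (x - y) + eta)%:E)%E & Pab f g L 0 1].
  move=> eta eta0.
  have [g [gc g0 g1 glen gfin]] := Hcurve x y eta eta0.
  exists g; split => //.
  have [B eqB] := finite_fsetP.1 gfin.
  have := ind_main f Theta g L _ fc gc glen Lip (size (finmap.enum_fset B)) (finmap.enum_fset B) 0 1 (leqnn _) (lexx 0) ler01 (lexx 1).
  apply => t /andP[t0 t1] Th.
  have H : ((g @` `[0, 1]) `&` Theta) (g t).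
    by split => //; exists t => //; rewrite /= in_itv /= !ltW.
  have E := f_equal (fun S : set 'rV[R]_d => S (g t)) eqB.
  have H2 := eq_rect _ (fun P : Prop => P) H _ E.
  exact: H2.
have [Lneg|L0] := ltP L 0.
  have [g [gc g0 g1 glen [_ Q]]] := getP 1 ltr01.
  by move: (Q Lneg); rewrite g0 g1 => ->; rewrite !subrr !enorm0 mulr0.
rewrite leNgt; apply/negP => H.
set D := enorm (f x - f y) - L * enorm (x - y).
have D0 : 0 < D by rewrite /D subr_gt0.
set e := D / 2.
have e0 : 0 < e by rewrite divr_gt0.
set eta := e / (2 * (L + 1)).
have L1 : 0 < L + 1 by rewrite ltr_wpDl.
have eta0 : 0 < eta by rewrite divr_gt0 // mulr_gt0.
have [g [gc g0 g1 glen [P _]]] := getP eta eta0.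
have e2 : 0 < e / 2 by rewrite divr_gt0.
have [n [u [xu Hu]]] := P L0 _ e2.
have ple : psum g n u < enorm (x - y) + eta.
  by rewrite -lte_fin; apply: le_lt_trans glen; apply: cl_part; exact: xpart_part.
have h1 : L * psum g n u <= L * (enorm (x - y) + eta).
  by rewrite ler_wpM2l // ltW.
have h2 : L * eta <= e / 2.
  rewrite /eta mulrA ler_pdivrMr ?mulr_gt0 //.
  have -> : e / 2 * (2 * (L + 1)) = L * e + e by field.
  by rewrite lerDl ltW.
rewrite g0 g1 in Hu.
have : enorm (f x - f y) <= L * enorm (x - y) + e.
  rewrite mulrDr in h1; lra.
rewrite /e; move: D0; rewrite /D; lra.
Qed.
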